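(* Let $0<b<c<1$. The safe $c$-capacity for $\mathrm{Indep}_b$ equals \[ \frac{-b\log(1-c)+c\log(1-b)}{c}. \]
   Context: All logarithms are base $2$. Collaborating cryptogenography protocol: there are $n$ players $\mathrm{plr}_1,\dots,\mathrm{plr}_n$; a secret $X$ (finitely supported) and indicators $L_1,\dots,L_n\in\{0,1\}$ ($L_i=1$ means $\mathrm{plr}_i$ knows $X$) have a joint distribution. A protocol $\pi$ specifies, for every possible partial transcript $t^k=(t_1,\dots,t_k)$ (the tuple of the first $k$ messages): whether communication stops; if not, which player $\mathrm{plr}_i$ sends the next message; and probability distributions $p_?$ and $(p_x)_{x}$ on a finite message set (depending on $t^k$). $\mathrm{plr}_i$ draws the next message, with fresh independent randomness, from $p_?$ if $L_i=0$ and from $p_x$ if $L_i=1$ and $X=x$. There is a number $\mathrm{length}(\pi)$ such that the protocol always stops after at most that many messages. $T$ denotes the random full transcript. Risky/safe protocols: for $L=(L_1,\dots,L_n)$ a random vector in $\{0,1\}^n$, a risky $(n,h,L,c,\epsilon)$-protocol is a collaborating cryptogenography protocol together with a function $D$ from transcripts to $\mathcal X=\{1,\dots,2^{\lceil h\rceil}\}$ such that, when $X$ is uniform on $\mathcal X$ and independent of $L$, for every $x\in\mathcal X$, with probability at least $1-\epsilon$ a transcript $t$ drawn from $T$ conditioned on $X=x$ satisfies both $\Pr(L_i=1\mid T=t,X=x)\le c$ for all $i$, and $D(t)=x$. A safe $(n,h,L,c,\epsilon)$-protocol is a risky one that additionally satisfies $\Pr(L_i=1\mid T=t,X=x)\le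 c$ for all $i,t,x$ with $\Pr(T=t,X=x)>0$. $\mathrm{Indep}_b(n)$ is the random vector $(L_1,\dots,L_n)$ of independent $\{0,1\}$-variables with $\Pr(L_i=1)=b$. A rate $R$ is safely (resp. riskily) $c$-achievable for $\mathrm{Indep}_b$ if for all $\epsilon>0$ and all $n_0$ there is a safe (resp. risky) $(n,nR,\mathrm{Indep}_b(n),c,\epsilon)$-protocol with $n\ge n_0$. The safe (resp. risky) $c$-capacity for $\mathrm{Indep}_b$ is the supremum of all safely (resp. riskily) $c$-achievable rates. *)

(* Defs.v *)
From Stdlib Require Import Reals Lra Lia List.
Import ListNotations.
Open Scope R_scope.

Definition log2 (x : R) : R := ln x / ln 2.

(** Ceiling of a real number ([Int_part] is the floor). *)
Definition Rceil (h : R) : Z := (- Int_part (- h))%Z.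

(** Size of the secret space X = {1,...,2^ceil(h)}; we label the secrets
    0, ..., Xsize h - 1.  (For ceil(h) < 0 we take the size to be 1.) *)
Definition Xsize (h : R) : nat := (2 ^ Z.to_nat (Rceil h))%nat.

Definition rsum (f : nat -> R) (l : list nat) : R :=
  fold_right (fun a acc => f a + acc) 0 l.

(** A step of the protocol: [None] = communication stops;
    [Some (i, M, pq, px)] = player [i] (indexed 0..n-1) sends the next message,
    drawn from the message set {0,...,M-1}, according to [pq] if it does not
    know X, and according to [px x] if it knows X = x. *)
Definition step : Type := option (nat * nat * (nat -> R) * (nat -> nat -> R)).

(** A collaborating cryptogenography protocol: a length bound and, for each
    partial transcript (list of messages so far), the next step. *)
Record protocol : Type := Protocol {
  plen : nat;
  paction : list nat -> step
}.

Definition is_dist (M : nat) (p : nat -> R) : Prop :=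
  (forall m, 0 <= p m) /\ rsum p (seq 0 M) = 1.

Definition wf_protocol (n K : nat) (P : protocol) : Prop :=
  (forall t, (plen P <= length t)%nat -> paction P t = None) /\
  (forall t i M pq px, paction P t = Some (i, M, pq, px) ->
     (i < n)%nat /\ is_dist M pq /\ (forall x, (x < K)%nat -> is_dist M (px x))).

(** Probability that the protocol, started after the partial transcript [pre],
    produces exactly the continuation [rest] and then stops, given X = x and
    knowledge vector L = l. *)
Fixpoint tprob (P : protocol) (x : nat) (l : list bool) (pre rest : list nat) : R :=
  match rest with
  | [] => match paction P pre with None => 1 | Some _ => 0 end
  | m :: rest' =>
      match paction P pre with
      | None => 0
      | Some (i, M, pq, px) =>
          (if Nat.ltb m M then (if nth i l false then px x m else pq m) else 0)
          * tprob P x l (pre ++ [m]) rest'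
      end
  end.

Fixpoint transcripts_from (P : protocol) (f : nat) (pre : list nat) : list (list nat) :=
  match paction P pre with
  | None => [pre]
  | Some (i0, M, pq0, px0) =>
      match f with
      | O => []
      | S f' => flat_map (fun m => transcripts_from P f' (pre ++ [m])) (seq 0 M)
      end
  end.

Definition transcripts (P : protocol) : list (list nat) :=
  transcripts_from P (plen P) [].

Fixpoint allbools (n : nat) : list (list bool) :=
  match n with
  | O => [[]]
  | S k => flat_map (fun l => [true :: l; false :: l]) (allbools k)
  end.

(** Law of Indep_b(n): Pr(L = l). *)
Definition indep_prob (b : R) (l : list bool) : R :=
  fold_right (fun (bi : bool) (acc : R) => ((if bi then b else 1 - b) * acc)%R) 1%R l.

(** Pr(T = t | X = x), with L ~ Indep_b(n) independent of X. *)
Definition prT (n : nat) (b : R) (P : protocol) (x : nat) (t : list nat) : R :=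
  fold_right (fun l acc => indep_prob b l * tprob P x l [] t + acc) 0 (allbools n).

(** Pr(T = t, L_i = 1 | X = x). *)
Definition prT_Li (n : nat) (b : R) (P : protocol) (i x : nat) (t : list nat) : R :=
  fold_right (fun l acc =>
      (if nth i l false then indep_prob b l * tprob P x l [] t else 0) + acc)
    0 (allbools n).

(** Pr(L_i = 1 | T = t, X = x)  (meaningful when Pr(T = t, X = x) > 0). *)
Definition posterior (n : nat) (b : R) (P : protocol) (i x : nat) (t : list nat) : R :=
  prT_Li n b P i x t / prT n b P x t.

Definition Rle_bool (a c : R) : bool := if Rle_dec a c then true else false.

Definition good (n : nat) (b c : R) (P : protocol) (D : list nat -> nat)
  (x : nat) (t : list nat) : bool :=
  forallb (fun i => Rle_bool (posterior n b P i x t) c) (seq 0 n) && Nat.eqb (D t) x.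

Definition risky_protocol (n : nat) (h b c eps : R) (P : protocol)
  (D : list nat -> nat) : Prop :=
  wf_protocol n (Xsize h) P /\
  (forall t, (D t < Xsize h)%nat) /\
  (forall x, (x < Xsize h)%nat ->
     1 - eps <= fold_right (fun t acc =>
                   (if good n b c P D x t then prT n b P x t else 0) + acc)
                 0 (transcripts P)).

Definition safe_protocol (n : nat) (h b c eps : R) (P : protocol)
  (D : list nat -> nat) : Prop :=
  risky_protocol n h b c eps P D /\
  (forall i x t, (i < n)%nat -> (x < Xsize h)%nat -> 0 < prT n b P x t ->
     posterior n b P i x t <= c).

Definition safely_achievable (b c Rt : R) : Prop :=
  forall eps, 0 < eps -> forall n0 : nat,
    exists n : nat, (n0 <= n)%nat /\
      exists (P : protocol) (D : list nat -> nat),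
        safe_protocol n (INR n * Rt) b c eps P D.

Definition is_safe_capacity (b c cap : R) : Prop :=
  is_lub (safely_achievable b c) cap.

(* Main.v *)
Require Import Defs.
From Stdlib Require Import Reals Lra Lia List ZArith Classical.
Import ListNotations.
Open Scope R_scope.


Definition sumL {A : Type} (f : A -> R) (l : list A) : R :=
  fold_right (fun a acc => f a + acc) 0 l.
Definition prodL (f : nat -> R) (l : list nat) : R :=
  fold_right (fun a acc => f a * acc) 1 l.

Lemma sumL_app {A} (f : A -> R) l1 l2 : sumL f (l1 ++ l2) = sumL f l1 + sumL f l2.
Proof. induction l1; simpl; [lra|]. unfold sumL in *; simpl; rewrite IHl1; lra. Qed.

Lemma sumL_flat_map {A B} (f : B -> R) (g : A -> list B) l :
  sumL f (flat_map g l) = sumL (fun a => sumL f (g a)) l.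
Proof. induction l; simpl; [reflexivity|]. rewrite sumL_app, IHl. reflexivity. Qed.

Lemma sumL_ext {A} (f g : A -> R) l : (forall a, In a l -> f a = g a) -> sumL f l = sumL g l.
Proof. induction l; intros H; simpl; [reflexivity|].
  unfold sumL in *; simpl. rewrite H by (left; auto). rewrite IHl; auto.
  intros; apply H; right; auto. Qed.

Lemma sumL_le {A} (f g : A -> R) l : (forall a, In a l -> f a <= g a) -> sumL f l <= sumL g l.
Proof. induction l; intros H; unfold sumL; simpl; [lra|].
  apply Rplus_le_compat. apply H; left; auto. apply IHl; intros; apply H; right; auto. Qed.

Lemma sumL_plus {A} (f g : A -> R) l : sumL (fun a => f a + g a) l = sumL f l + sumL g l.
Proof. induction l; unfold sumL in *; simpl; [lra|]. rewrite IHl; lra. Qed.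

Lemma sumL_scal {A} (k : R) (f : A -> R) l : sumL (fun a => k * f a) l = k * sumL f l.
Proof. induction l; unfold sumL in *; simpl; [lra|]. rewrite IHl; lra. Qed.

Lemma sumL_nonneg {A} (f : A -> R) l : (forall a, In a l -> 0 <= f a) -> 0 <= sumL f l.
Proof. intros H. replace 0 with (sumL (fun _ : A => 0) l).
  apply sumL_le; auto. induction l; unfold sumL in *; simpl; [lra|]. rewrite IHl; [lra|].
  intros; apply H; right; auto. Qed.

Lemma sumL_swap {A B} (F : A -> B -> R) la lb :
  sumL (fun a => sumL (fun b => F a b) lb) la = sumL (fun b => sumL (fun a => F a b) la) lb.
Proof. induction la; simpl.
  - induction lb; unfold sumL in *; simpl; [reflexivity|]. rewrite <- IHlb. lra.
  - change (sumL (fun b => F a b) lb + sumL (fun a0 => sumL (fun b => F a0 b) lb) la =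
      sumL (fun b => F a b + sumL (fun a0 => F a0 b) la) lb).
    rewrite sumL_plus, IHla. reflexivity. Qed.

Lemma sumL_zero {A} (l : list A) : sumL (fun _ => 0) l = 0.
Proof. induction l; unfold sumL in *; simpl; [|rewrite IHl]; lra. Qed.

Lemma prodL_mult f g l : prodL (fun a => f a * g a) l = prodL f l * prodL g l.
Proof. induction l; unfold prodL in *; simpl; [lra|]. rewrite IHl; lra. Qed.

Lemma prodL_ext f g l : (forall a, In a l -> f a = g a) -> prodL f l = prodL g l.
Proof. induction l; intros H; unfold prodL in *; simpl; [reflexivity|].
  rewrite H by (left; auto). rewrite IHl; auto. intros; apply H; right; auto. Qed.

Lemma prodL_nonneg f l : (forall a, In a l -> 0 <= f a) -> 0 <= prodL f l.
Proof. induction l; intros H; unfold prodL in *; simpl; [lra|].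
  apply Rmult_le_pos. apply H; left; auto. apply IHl; intros; apply H; right; auto. Qed.

Lemma prodL_pos f l : (forall a, In a l -> 0 < f a) -> 0 < prodL f l.
Proof. induction l; intros H; unfold prodL in *; simpl; [lra|].
  apply Rmult_lt_0_compat. apply H; left; auto. apply IHl; intros; apply H; right; auto. Qed.

Lemma prodL_map f g l : prodL f (map g l) = prodL (fun a => f (g a)) l.
Proof. induction l; unfold prodL in *; simpl; [|rewrite IHl]; reflexivity. Qed.

Lemma prodL_app f l1 l2 : prodL f (l1 ++ l2) = prodL f l1 * prodL f l2.
Proof. induction l1; unfold prodL in *; simpl; [lra|]. rewrite IHl1; lra. Qed.

Lemma prodL_one l : prodL (fun _ => 1) l = 1.
Proof. induction l; unfold prodL in *; simpl; [|rewrite IHl]; lra. Qed.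

Lemma prodL_pos_each f l : (forall a, In a l -> 0 <= f a) -> 0 < prodL f l -> forall a, In a l -> 0 < f a.
Proof. induction l; intros H Hp a0 Ha; [destruct Ha|]. unfold prodL in Hp; simpl in Hp.
  fold (prodL f l) in Hp.
  assert (0 <= f a) by (apply H; left; auto).
  assert (0 <= prodL f l) by (apply prodL_nonneg; intros; apply H; right; auto).
  destruct Ha as [<-|Ha].
  - destruct (Req_dec (f a) 0) as [E|E]; [rewrite E in Hp; lra| lra].
  - apply IHl; auto. intros; apply H; right; auto.
    destruct (Req_dec (prodL f l) 0) as [E|E]; [rewrite E in Hp; lra| lra]. Qed.

Lemma prodL_upd (u : R) (g : nat -> R) i s len : (s <= i < s + len)%nat ->
  prodL (fun j => if Nat.eqb j i then u else g j) (seq s len) =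
  u * prodL (fun j => if Nat.eqb j i then 1 else g j) (seq s len).
Proof. revert s; induction len; intros s Hi; [lia|].
  change (seq s (S len)) with (s :: seq (S s) len).
  change (prodL ?f (?a :: ?l)) with (f a * prodL f l).
  destruct (Nat.eqb_spec s i).
  - subst. rewrite Nat.eqb_refl. rewrite (prodL_ext _ g), (prodL_ext (fun j => if Nat.eqb j i then 1 else g j) g). lra.
    all: intros a Ha; apply in_seq in Ha; destruct (Nat.eqb_spec a i); [lia|auto].
  - rewrite IHlen by lia. destruct (Nat.eqb_spec s i); [lia|]. lra. Qed.

Lemma prodL_delta (v : nat -> R) j s len : (s <= j < s + len)%nat ->
  prodL (fun i => if Nat.eqb j i then v i else 1) (seq s len) = v j.
Proof. intros H. rewrite (prodL_ext _ (fun i => if Nat.eqb i j then v j else 1)).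
  - rewrite prodL_upd by auto. rewrite (prodL_ext _ (fun _ => 1)), prodL_one; [lra|].
    intros a _; destruct (Nat.eqb a j); auto.
  - intros a _; destruct (Nat.eqb_spec j a), (Nat.eqb_spec a j); subst; auto; lia. Qed.

Lemma prodL_seq_S f s len : prodL f (seq (S s) len) = prodL (fun j => f (S j)) (seq s len).
Proof. rewrite <- seq_shift, prodL_map. reflexivity. Qed.

Section AB.
Variable b : R.
Lemma allbools_prod n (f : nat -> bool -> R) :
  sumL (fun l => indep_prob b l * prodL (fun j => f j (nth j l false)) (seq 0 n)) (allbools n)
  = prodL (fun j => b * f j true + (1 - b) * f j false) (seq 0 n).
Proof. revert f; induction n; intros f.
  - simpl. unfold sumL, prodL, indep_prob; simpl; lra.
  - change (allbools (S n)) with (flat_map (fun l => [true :: l; false :: l]) (allbools n)).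
    rewrite sumL_flat_map.
    change (seq 0 (S n)) with (0%nat :: seq 1 n).
    change (prodL ?f (?a :: ?l)) with (f a * prodL f l). rewrite prodL_seq_S.
    rewrite <- (IHn (fun j => f (S j))), <- sumL_scal.
    apply sumL_ext; intros l _. unfold sumL at 1; simpl.
    change (prodL ?f (?a :: ?l)) with (f a * prodL f l). rewrite !prodL_seq_S. simpl.
    unfold indep_prob; simpl; fold (indep_prob b l). lra.
Qed.
End AB.

Definition stepw (P : protocol) (x : nat) (l : list bool) (pre : list nat) (m : nat) : R :=
  match paction P pre with
  | None => 0
  | Some (i, M, pq, px) => if Nat.ltb m M then (if nth i l false then px x m else pq m) else 0
  end.

Fixpoint pw (P : protocol) (x : nat) (l : list bool) (pre rest : list nat) : R :=
  match rest with
  | [] => 1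
  | m :: rest' => stepw P x l pre m * pw P x l (pre ++ [m]) rest'
  end.

Lemma tprob_cons P x l pre m r : tprob P x l pre (m :: r) = stepw P x l pre m * tprob P x l (pre ++ [m]) r.
Proof. simpl. unfold stepw. destruct (paction P pre) as [[[[i M] pq] px]|]; lra. Qed.

Lemma tprob_app P x l pre r1 r2 :
  tprob P x l pre (r1 ++ r2) = pw P x l pre r1 * tprob P x l (pre ++ r1) r2.
Proof. revert pre; induction r1; intros pre.
  - simpl. rewrite app_nil_r; lra.
  - change ((a::r1)++r2) with (a::(r1++r2)). rewrite tprob_cons, IHr1, <- app_assoc. simpl. lra. Qed.

Lemma pw_snoc P x l pre r m : pw P x l pre (r ++ [m]) = pw P x l pre r * stepw P x l (pre ++ r) m.
Proof. revert pre; induction r; intros pre; simpl.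
  - rewrite app_nil_r; lra.
  - rewrite IHr, <- app_assoc. simpl. lra. Qed.

Lemma tprob_nil P x l pre : tprob P x l pre [] = match paction P pre with None => 1 | Some _ => 0 end.
Proof. reflexivity. Qed.

Fixpoint phiw (phi : list nat -> nat -> R) (pre rest : list nat) : R :=
  match rest with
  | [] => 1
  | m :: r => phi pre m * phiw phi (pre ++ [m]) r
  end.

Lemma phiw_snoc phi pre r m : phiw phi pre (r ++ [m]) = phiw phi pre r * phi (pre ++ r) m.
Proof. revert pre; induction r; intros pre; simpl.
  - rewrite app_nil_r; lra.
  - rewrite IHr, <- app_assoc. simpl. lra. Qed.

Lemma sum_transcripts_gen P x l (phi : list nat -> nat -> R) (E : list nat -> R) :
  (forall t, (plen P <= length t)%nat -> paction P t = None) ->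
  (forall pre, paction P pre = None -> E pre = 1) ->
  (forall pre i M pq px, paction P pre = Some (i, M, pq, px) ->
     sumL (fun m => stepw P x l pre m * phi pre m * E (pre ++ [m])) (seq 0 M) = E pre) ->
  forall f pre, (plen P <= length pre + f)%nat ->
  sumL (fun t => tprob P x l [] t * phiw phi [] t) (transcripts_from P f pre)
  = pw P x l [] pre * phiw phi [] pre * E pre.
Proof. intros Hwf HE1 HE2. induction f; intros pre Hlen; simpl.
  - assert (Hn : paction P pre = None) by (apply Hwf; lia).
    rewrite Hn. unfold sumL; simpl.
    rewrite <- (app_nil_r pre) at 1. rewrite tprob_app; change ([] ++ pre) with pre; rewrite tprob_nil, Hn.
    rewrite HE1 by auto. lra.
  - destruct (paction P pre) as [[[[i M] pq] px]|] eqn:Ha.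
    + rewrite sumL_flat_map.
      rewrite (sumL_ext _ (fun m => pw P x l [] pre * phiw phi [] pre *
                 (stepw P x l pre m * phi pre m * E (pre ++ [m])))).
      * rewrite sumL_scal, (HE2 pre i M pq px Ha). lra.
      * intros m _. rewrite IHf by (rewrite length_app; simpl; lia).
        rewrite pw_snoc, phiw_snoc. simpl. lra.
    + unfold sumL; simpl. rewrite <- (app_nil_r pre) at 1. rewrite tprob_app; change ([] ++ pre) with pre; rewrite tprob_nil, Ha.
      rewrite HE1 by auto. lra.
Qed.

Definition facstep (P : protocol) (x i : nat) (bb : bool) (pre : list nat) (m : nat) : R :=
  match paction P pre with
  | None => 1
  | Some (j, M, pq, px) => if Nat.eqb j i then (if bb then px x m else pq m) else 1
  end.

Fixpoint fac (P : protocol) (x i : nat) (bb : bool) (pre rest : list nat) : R :=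
  match rest with
  | [] => 1
  | m :: r => facstep P x i bb pre m * fac P x i bb (pre ++ [m]) r
  end.

Fixpoint okw (P : protocol) (pre rest : list nat) : R :=
  match rest with
  | [] => match paction P pre with None => 1 | Some _ => 0 end
  | m :: r => match paction P pre with
              | None => 0
              | Some (j, M, _, _) => (if Nat.ltb m M then 1 else 0) * okw P (pre ++ [m]) r
              end
  end.

Lemma tprob_fact n P x l pre rest :
  (forall q j M pq px, paction P q = Some (j, M, pq, px) -> (j < n)%nat) ->
  tprob P x l pre rest = okw P pre rest * prodL (fun i => fac P x i (nth i l false) pre rest) (seq 0 n).
Proof. intros Hn. revert pre; induction rest as [|m r IH]; intros pre.
  - simpl. rewrite prodL_one. destruct (paction P pre) as [[[[i M] pq] px]|]; lra.
  - rewrite tprob_cons. simpl. unfold facstep, stepw.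
    destruct (paction P pre) as [[[[j M] pq] px]|] eqn:Ha.
    + rewrite prodL_mult, IH.
      rewrite (prodL_delta (fun i => if nth i l false then px x m else pq m)) by (pose proof (Hn _ _ _ _ _ Ha); lia).
      destruct (Nat.ltb m M); lra.
    + lra.
Qed.

Lemma tprob_nil_indep P x y pre rest : tprob P x [] pre rest = tprob P y [] pre rest.
Proof. revert pre; induction rest; intros pre; simpl; [reflexivity|].
  destruct (paction P pre) as [[[[j M] pq] px]|]; [|reflexivity].
  rewrite IHrest. destruct j; reflexivity. Qed.

Lemma okw_nonneg P pre rest : 0 <= okw P pre rest.
Proof. revert pre; induction rest; intros pre; simpl.
  - destruct (paction P pre); lra.
  - destruct (paction P pre) as [[[[j M] pq] px]|]; [|lra].
    apply Rmult_le_pos; [destruct (Nat.ltb a M); lra|auto]. Qed.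

Definition spk_ok (n : nat) (P : protocol) :=
  forall q j M pq px, paction P q = Some (j, M, pq, px) -> (j < n)%nat.

Lemma wf_spk n K P : wf_protocol n K P -> spk_ok n P.
Proof. intros [_ H] q j M pq px Ha. apply (H _ _ _ _ _ Ha). Qed.

Definition gfac (b : R) P x t (j : nat) : R :=
  b * fac P x j true [] t + (1 - b) * fac P x j false [] t.

Lemma prT_fact n b P x t : spk_ok n P ->
  prT n b P x t = okw P [] t * prodL (gfac b P x t) (seq 0 n).
Proof. intros Hs. unfold prT. change (fold_right _ 0 (allbools n)) with
  (sumL (fun l => indep_prob b l * tprob P x l [] t) (allbools n)).
  rewrite (sumL_ext _ (fun l => okw P [] t * (indep_prob b l *
      prodL (fun j => (fun j bb => fac P x j bb [] t) j (nth j l false)) (seq 0 n)))).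
  - rewrite sumL_scal, (allbools_prod b n (fun j bb => fac P x j bb [] t)). reflexivity.
  - intros l _. rewrite (tprob_fact n) by auto. lra.
Qed.

Lemma prT_Li_fact n b P i x t : spk_ok n P -> (i < n)%nat ->
  prT_Li n b P i x t = okw P [] t *
    prodL (fun j => if Nat.eqb j i then b * fac P x i true [] t else gfac b P x t j) (seq 0 n).
Proof. intros Hs Hi. unfold prT_Li. change (fold_right _ 0 (allbools n)) with
  (sumL (fun l => if nth i l false then indep_prob b l * tprob P x l [] t else 0) (allbools n)).
  set (f := fun (j : nat) (bb : bool) => if Nat.eqb j i then (if bb then fac P x i true [] t else 0)
                        else fac P x j bb [] t).
  rewrite (sumL_ext _ (fun l => okw P [] t * (indep_prob b l *
      prodL (fun j => f j (nth j l false)) (seq 0 n)))).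
  - rewrite sumL_scal, (allbools_prod b n f). f_equal. apply prodL_ext. intros j _.
    unfold f, gfac. destruct (Nat.eqb_spec j i); [subst; lra|reflexivity].
  - intros l _. rewrite (tprob_fact n) by auto.
    destruct (nth i l false) eqn:Eh.
    + rewrite (prodL_ext (fun j => f j (nth j l false)) (fun j => fac P x j (nth j l false) [] t)).
      lra. intros j _. unfold f. destruct (Nat.eqb_spec j i); [subst; rewrite Eh; auto|auto].
    + rewrite (prodL_ext (fun j => f j (nth j l false))
         (fun j => if Nat.eqb j i then 0 else f j (nth j l false))).
      rewrite prodL_upd by lia. lra.
      intros j _. unfold f. destruct (Nat.eqb_spec j i); [subst; rewrite Eh; auto|auto].
Qed.

Lemma fac_nonneg P x i bb pre rest :
  (forall q j M pq px, paction P q = Some (j, M, pq, px) -> (forall m, 0 <= pq m) /\ (forall m, 0 <= px x m)) ->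
  0 <= fac P x i bb pre rest.
Proof. intros H. revert pre; induction rest; intros pre; simpl; [lra|].
  apply Rmult_le_pos; auto. unfold facstep.
  destruct (paction P pre) as [[[[j M] pq] px]|] eqn:Ha; [|lra].
  destruct (H _ _ _ _ _ Ha). destruct (Nat.eqb j i), bb; auto; lra. Qed.

Lemma wf_nonneg n K P x : wf_protocol n K P -> (x < K)%nat ->
  forall q j M pq px, paction P q = Some (j, M, pq, px) -> (forall m, 0 <= pq m) /\ (forall m, 0 <= px x m).
Proof. intros [_ H] Hx q j M pq px Ha. destruct (H _ _ _ _ _ Ha) as (_ & [H1 _] & H2).
  split; auto. apply (H2 x Hx). Qed.

Lemma total_prob n K P x l : wf_protocol n K P -> (x < K)%nat ->
  sumL (fun t => tprob P x l [] t) (transcripts P) = 1.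
Proof. intros Hw Hx. pose proof Hw as [H1 H2].
  pose proof (sum_transcripts_gen P x l (fun _ _ => 1) (fun _ => 1) H1
     (fun _ _ => eq_refl)) as G.
  unfold transcripts.
  assert (Hph : forall pre rest, phiw (fun _ _ => 1) pre rest = 1).
  { intros pre rest; revert pre; induction rest; intros; simpl; [|rewrite IHrest]; lra. }
  rewrite (sumL_ext _ (fun t => tprob P x l [] t * phiw (fun _ _ => 1) [] t)).
  - rewrite G; simpl; [lra| |lia].
    intros pre i M pq px Ha. destruct (H2 _ _ _ _ _ Ha) as (_ & [_ Hq] & Hp).
    unfold stepw; rewrite Ha.
    rewrite (sumL_ext _ (fun m => if nth i l false then px x m else pq m)).
    + destruct (nth i l false); [apply (Hp x Hx)|apply Hq].
    + intros m Hm. apply in_seq in Hm. replace (Nat.ltb m M) with true by (symmetry; apply Nat.ltb_lt; lia). lra.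
  - intros t _. rewrite Hph. lra.
Qed.

Lemma indep_sum n : forall b, sumL (fun l => indep_prob b l) (allbools n) = 1.
Proof. intros b. pose proof (allbools_prod b n (fun _ _ => 1)) as H.
  rewrite (prodL_ext (fun j => b * 1 + (1 - b) * 1) (fun _ => 1)), prodL_one in H by (intros; lra).
  rewrite <- H at 1. apply sumL_ext. intros l _. lra. Qed.

Lemma sum_prT n K b P x : wf_protocol n K P -> (x < K)%nat ->
  sumL (fun t => prT n b P x t) (transcripts P) = 1.
Proof. intros Hw Hx. unfold prT.
  change (fun t => fold_right _ 0 (allbools n)) with
   (fun t => sumL (fun l => indep_prob b l * tprob P x l [] t) (allbools n)).
  rewrite sumL_swap. rewrite <- (indep_sum n b). apply sumL_ext. intros l _.
  rewrite sumL_scal. pose proof (total_prob n K P x l Hw Hx) as T. change (sumL (tprob P x l []) (transcripts P) = 1) in T. rewrite T. lra. Qed.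

Lemma sum_prT_Li n K b P i x : wf_protocol n K P -> (x < K)%nat -> (i < n)%nat ->
  sumL (fun t => prT_Li n b P i x t) (transcripts P) = b.
Proof. intros Hw Hx Hi. unfold prT_Li.
  change (fun t => fold_right _ 0 (allbools n)) with
   (fun t => sumL (fun l => if nth i l false then indep_prob b l * tprob P x l [] t else 0) (allbools n)).
  rewrite sumL_swap.
  pose proof (allbools_prod b n (fun j bb => if Nat.eqb j i then (if bb then 1 else 0) else 1)) as H.
  rewrite (prodL_ext _ (fun j => if Nat.eqb j i then b else 1)) in H.
  2:{ intros j _. destruct (Nat.eqb j i); lra. }
  rewrite prodL_upd in H by lia. rewrite (prodL_ext (fun j => if Nat.eqb j i then 1 else 1) (fun _ => 1)), prodL_one in H by (intros a _; destruct (Nat.eqb a i); auto).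
  transitivity (sumL (fun l => indep_prob b l * prodL (fun j => (if Nat.eqb j i then
      (if nth j l false then 1 else 0) else 1)) (seq 0 n)) (allbools n)); [|rewrite H; lra].
  apply sumL_ext; intros l _.
  destruct (nth i l false) eqn:Eh.
  - rewrite sumL_scal. pose proof (total_prob n K P x l Hw Hx) as T. change (sumL (tprob P x l []) (transcripts P) = 1) in T. rewrite T.
    rewrite (prodL_ext _ (fun _ => 1)), prodL_one. lra.
    intros j _. destruct (Nat.eqb_spec j i); [subst; rewrite Eh|]; auto.
  - rewrite sumL_zero. rewrite (prodL_ext _ (fun j => if Nat.eqb j i then 0 else (fun _ => 1) j)).
    rewrite prodL_upd by lia. lra.
    intros j _. destruct (Nat.eqb_spec j i); [subst; rewrite Eh|]; auto.
Qed.

Lemma ln_le_sub1 y : 0 < y -> ln y <= y - 1.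
Proof. intros Hy. pose proof (exp_ineq1_le (ln y)). rewrite exp_ln in H; lra. Qed.

Lemma ln_le x y : 0 < x -> x <= y -> ln x <= ln y.
Proof. intros Hx Hxy. destruct (Rle_lt_or_eq_dec _ _ Hxy) as [H|H].
  - left; apply ln_increasing; auto.
  - subst; lra. Qed.

Lemma exp_convex lam a : 0 <= lam <= 1 -> exp (lam * a) <= (1 - lam) + lam * exp a.
Proof. intros Hl.
  pose proof (exp_ineq1_le (- (lam * a))) as H1.
  pose proof (exp_ineq1_le ((1 - lam) * a)) as H2.
  assert (E1 : exp (lam * a) * exp (- (lam * a)) = 1) by (rewrite <- exp_plus; replace (lam*a + - (lam*a)) with 0 by ring; apply exp_0).
  assert (E2 : exp (lam * a) * exp ((1 - lam) * a) = exp a) by (rewrite <- exp_plus; f_equal; ring).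
  pose proof (exp_pos (lam * a)) as P.
  assert (A1 : exp (lam * a) * (1 - lam * a) <= 1).
  { rewrite <- E1. apply Rmult_le_compat_l; lra. }
  assert (A2 : exp (lam * a) * (1 + (1 - lam) * a) <= exp a).
  { rewrite <- E2. apply Rmult_le_compat_l; lra. }
  assert (exp (lam * a) = (1 - lam) * (exp (lam * a) * (1 - lam * a)) + lam * (exp (lam * a) * (1 + (1 - lam) * a))) by ring.
  nra. Qed.

Lemma neg_ln_chord q c : 0 <= q <= c -> 0 < c < 1 -> - ln (1 - q) <= (- ln (1 - c) / c) * q.
Proof. intros Hq Hc. set (lam := q / c).
  assert (Hlc : lam * c = q) by (unfold lam; field; lra).
  assert (Hl : 0 <= lam <= 1) by (split; nra).
  pose proof (exp_convex lam (ln (1 - c)) Hl) as H. rewrite exp_ln in H by lra.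
  assert (E : (1 - lam) + lam * (1 - c) = 1 - q) by (unfold lam; field; lra).
  rewrite E in H. apply ln_le in H; [|apply exp_pos]. rewrite ln_exp in H.
  replace (- ln (1 - c) / c * q) with (- (lam * ln (1 - c))) by (unfold lam; field; lra). lra. Qed.

Lemma ln_prodL f l : (forall a, In a l -> 0 < f a) -> ln (prodL f l) = sumL (fun a => ln (f a)) l.
Proof. induction l; intros H; unfold prodL, sumL in *; simpl; [apply ln_1|].
  fold (prodL f l) in *. fold (sumL (fun a => ln (f a)) l) in *.
  rewrite ln_mult. rewrite IHl; auto. intros; apply H; right; auto. apply H; left; auto.
  apply prodL_pos; intros; apply H; right; auto. Qed.

Lemma prodL_div f h l : (forall a, In a l -> h a <> 0) -> prodL f l / prodL h l = prodL (fun a => f a / h a) l.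
Proof. induction l; intros H; unfold prodL in *; simpl; [field|].
  fold (prodL f l) (prodL h l) (prodL (fun a => f a / h a) l) in *.
  rewrite <- IHl by (intros; apply H; right; auto).
  assert (h a <> 0) by (apply H; left; auto).
  assert (prodL h l <> 0).
  { clear IHl. induction l; unfold prodL; simpl; [lra|]. fold (prodL h l).
    apply Rmult_integral_contrapositive; split; [apply H; right; left; auto|].
    apply IHl; intros; apply H. destruct H1; [left|right;right]; auto. } 
  field; auto. Qed.

Lemma DV_point p q g : 0 <= p -> 0 <= q -> (0 < p -> 0 < q) -> 0 < g ->
  p * ln g - p * ln 2 - g * q / 2 + p <= p * ln (p / q).
Proof. intros Hp Hq Hpq Hg. destruct (Req_dec p 0) as [E|E].
  - subst. assert (0 <= g * q) by (apply Rmult_le_pos; lra). lra.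
  - assert (Hp' : 0 < p) by lra. specialize (Hpq Hp').
    pose proof (ln_le_sub1 (g * q / (2 * p))) as H.
    assert (0 < g * q / (2 * p)) by (apply Rdiv_lt_0_compat; nra).
    specialize (H H0).
    unfold Rdiv in H. rewrite !ln_mult in H by (try apply Rinv_0_lt_compat; nra).
    rewrite ln_Rinv in H by nra. rewrite ln_mult in H by lra.
    unfold Rdiv. rewrite ln_mult by (try apply Rinv_0_lt_compat; lra). rewrite ln_Rinv by lra.
    assert (p * (g * q * / (2 * p)) = g * q / 2) by (field; lra).
    nra. Qed.

Definition Rr b P x t n i := prodL (fun j => if Nat.eqb j i then 1 else gfac b P x t j) (seq 0 n).

Lemma split_i n b P x t i : spk_ok n P -> (i < n)%nat ->
  prT n b P x t = okw P [] t * gfac b P x t i * Rr b P x t n i /\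
  prT_Li n b P i x t = okw P [] t * (b * fac P x i true [] t) * Rr b P x t n i.
Proof. intros Hs Hi. split.
  - rewrite prT_fact by auto.
    rewrite (prodL_ext (gfac b P x t) (fun j => if Nat.eqb j i then gfac b P x t i else gfac b P x t j)).
    + rewrite prodL_upd by lia. unfold Rr. lra.
    + intros j _. destruct (Nat.eqb_spec j i); subst; auto.
  - rewrite prT_Li_fact by auto. rewrite prodL_upd by lia. unfold Rr. lra.
Qed.

Section Nonneg.
Variables (n K : nat) (b : R) (P : protocol) (x : nat) (t : list nat).
Hypothesis Hw : wf_protocol n K P.
Hypothesis Hx : (x < K)%nat.
Hypothesis Hb : 0 < b < 1.

Lemma F_nonneg i bb : 0 <= fac P x i bb [] t.
Proof. apply fac_nonneg. apply (wf_nonneg n K); auto. Qed.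

Lemma g_nonneg j : 0 <= gfac b P x t j.
Proof. unfold gfac. pose proof (F_nonneg j true). pose proof (F_nonneg j false). nra. Qed.

Lemma Rr_nonneg i : 0 <= Rr b P x t n i.
Proof. apply prodL_nonneg. intros j _. destruct (Nat.eqb j i); [lra|apply g_nonneg]. Qed.

Lemma prTLi_le i : (i < n)%nat -> 0 <= prT_Li n b P i x t <= prT n b P x t.
Proof. intros Hi. destruct (split_i n b P x t i (wf_spk n K P Hw) Hi) as [E1 E2].
  rewrite E1, E2. pose proof (okw_nonneg P [] t). pose proof (Rr_nonneg i).
  pose proof (F_nonneg i true). pose proof (F_nonneg i false). unfold gfac.
  assert (0 <= b * fac P x i true [] t) by nra.
  assert (0 <= okw P [] t * Rr b P x t n i) by nra.
  assert (0 <= (1 - b) * fac P x i false [] t) by nra.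
  assert (0 <= okw P [] t * Rr b P x t n i * ((1 - b) * fac P x i false [] t)) by (apply Rmult_le_pos; auto).
  split. nra. nra. Qed.

Lemma prT_nonneg : 0 <= prT n b P x t.
Proof. rewrite prT_fact by (apply (wf_spk n K P Hw)). apply Rmult_le_pos. apply okw_nonneg.
  apply prodL_nonneg; intros; apply g_nonneg. Qed.
End Nonneg.

Definition kap c := - ln (1 - c) / c.

Lemma conv_point n K b c P x t : wf_protocol n K P -> (x < K)%nat -> 0 < b -> b < c -> c < 1 ->
  (forall i, (i < n)%nat -> 0 < prT n b P x t -> posterior n b P i x t <= c) ->
  (0 < prT n b P x t -> 0 < tprob P x [] [] t) /\
  prT n b P x t * ln (prT n b P x t / tprob P x [] [] t) <=
    sumL (fun i => prT n b P x t * ln (1 - b) + kap c * prT_Li n b P i x t) (seq 0 n).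
Proof. intros Hw Hx Hb Hbc Hc Hsafe.
  assert (Hb1 : 0 < b < 1) by lra.
  pose proof (wf_spk n K P Hw) as Hs.
  destruct (Req_dec (prT n b P x t) 0) as [Z|NZ].
  { split; [lra|]. rewrite Z, Rmult_0_l. apply sumL_nonneg. intros i Hi. apply in_seq in Hi.
    pose proof (prTLi_le n K b P x t Hw Hx Hb1 i ltac:(lia)). rewrite Z in H.
    replace (prT_Li n b P i x t) with 0 by lra. lra. }
  assert (Hp : 0 < prT n b P x t) by (pose proof (prT_nonneg n K b P x t Hw Hx Hb1); lra).
  set (O := okw P [] t).
  assert (HP0 : tprob P x [] [] t = O * prodL (fun j => fac P x j false [] t) (seq 0 n)).
  { rewrite (tprob_fact n) by auto. unfold O. f_equal. apply prodL_ext. intros j _. destruct j; reflexivity. }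
  pose proof (prT_fact n b P x t Hs) as HT. fold O in HT.
  assert (HO : 0 < O).
  { assert (0 <= O) by apply okw_nonneg. destruct (Req_dec O 0) as [E|E]; [|lra].
    rewrite HT, E in Hp. lra. }
  assert (HG : 0 < prodL (gfac b P x t) (seq 0 n)).
  { assert (0 <= prodL (gfac b P x t) (seq 0 n)) by (apply prodL_nonneg; intros; apply (g_nonneg n K); auto).
    destruct (Req_dec (prodL (gfac b P x t) (seq 0 n)) 0) as [E|E]; [|lra]. rewrite HT, E in Hp. lra. }
  assert (Hg : forall j, In j (seq 0 n) -> 0 < gfac b P x t j).
  { apply prodL_pos_each; auto. intros; apply (g_nonneg n K); auto. }
  assert (Hq : forall j, (j < n)%nat ->
     b * fac P x j true [] t <= c * gfac b P x t j /\
     prT_Li n b P j x t = prT n b P x t * (b * fac P x j true [] t / gfac b P x t j)).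
  { intros j Hj. destruct (split_i n b P x t j Hs Hj) as [E1 E2]. fold O in E1, E2.
    assert (Hgj : 0 < gfac b P x t j) by (apply Hg; apply in_seq; lia).
    assert (HR : 0 < Rr b P x t n j).
    { pose proof (Rr_nonneg n K b P x t Hw Hx Hb1 j). destruct (Req_dec (Rr b P x t n j) 0) as [E|E]; [|lra].
      rewrite E1, E in Hp. lra. }
    split.
    - specialize (Hsafe j Hj Hp). unfold posterior in Hsafe. rewrite E1, E2 in Hsafe.
      replace (O * (b * fac P x j true [] t) * Rr b P x t n j / (O * gfac b P x t j * Rr b P x t n j))
        with (b * fac P x j true [] t / gfac b P x t j) in Hsafe by (field; split; lra).
      apply (Rmult_le_compat_r (gfac b P x t j)) in Hsafe; [|lra].
      unfold Rdiv in Hsafe. rewrite Rmult_assoc, Rinv_l, Rmult_1_r in Hsafe by lra. lra.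
    - rewrite E1, E2. field. lra. }
  assert (HF0 : forall j, In j (seq 0 n) -> 0 < fac P x j false [] t).
  { intros j Hj. pose proof Hj as Hj'. apply in_seq in Hj'. destruct (Hq j ltac:(lia)) as [H1 _].
    pose proof (Hg j Hj). unfold gfac in *. assert ((1 - b) * fac P x j false [] t > 0) by nra. nra. }
  split.
  { intros _. rewrite HP0. apply Rmult_lt_0_compat; auto. apply prodL_pos; auto. }
  assert (Hratio : prT n b P x t / tprob P x [] [] t =
     prodL (fun j => gfac b P x t j / fac P x j false [] t) (seq 0 n)).
  { rewrite HT, HP0. rewrite <- prodL_div by (intros j Hj; specialize (HF0 j Hj); lra).
    field. split; [|lra]. pose proof (prodL_pos _ _ HF0). lra. }
  rewrite Hratio, ln_prodL.
  2:{ intros j Hj. apply Rdiv_lt_0_compat; auto. }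
  rewrite <- sumL_scal. apply sumL_le. intros j Hj. pose proof Hj as Hj'. apply in_seq in Hj'.
  destruct (Hq j ltac:(lia)) as [H1 H2]. rewrite H2.
  set (F1 := fac P x j true [] t) in *. set (F0 := fac P x j false [] t) in *.
  set (g := gfac b P x t j) in *.
  assert (Hgj : 0 < g) by (apply Hg; auto). assert (HF0j : 0 < F0) by (apply HF0; auto).
  assert (HF1 : 0 <= F1) by (apply (F_nonneg n K); auto).
  set (q := b * F1 / g).
  assert (Hq0 : 0 <= q <= c).
  { unfold q. split. unfold Rdiv; apply Rmult_le_pos; [nra|left; apply Rinv_0_lt_compat; lra].
    apply (Rmult_le_reg_r g); auto. unfold Rdiv. rewrite Rmult_assoc, Rinv_l, Rmult_1_r by lra. lra. }
  assert (Hgf : g / F0 = (1 - b) / (1 - q)).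
  { assert (E : (1 - b) * F0 = g * (1 - q)).
    { unfold q. assert (g = b * F1 + (1 - b) * F0) by reflexivity. field_simplify; [|lra]. lra. }
    assert (E2 : 1 - b = g * (1 - q) * / F0) by (rewrite <- E; field; lra).
    rewrite E2. field. split; lra. }
  rewrite Hgf. unfold Rdiv at 1. rewrite ln_mult by (try apply Rinv_0_lt_compat; lra).
  rewrite ln_Rinv by lra.
  pose proof (neg_ln_chord q c Hq0 ltac:(lra)). unfold kap.
  assert (0 <= prT n b P x t) by lra. nra.
Qed.

Lemma sumL_const {A} v (l : list A) : sumL (fun _ => v) l = INR (length l) * v.
Proof. induction l; unfold sumL in *; [simpl; lra|]. change (length (a :: l)) with (S (length l)).
  rewrite S_INR. simpl. rewrite IHl. lra. Qed.

Lemma sumL_lt {A} (f g : A -> R) l : l <> [] -> (forall a, In a l -> f a < g a) -> sumL f l < sumL g l.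
Proof. destruct l as [|a l]; intros Hn H; [congruence|]. unfold sumL; simpl.
  fold (sumL f l) (sumL g l).
  assert (sumL f l <= sumL g l) by (apply sumL_le; intros; left; apply H; right; auto).
  specialize (H a (or_introl eq_refl)). lra. Qed.

Lemma delta_sum d v s len : 0 <= v -> sumL (fun x => if Nat.eqb d x then v else 0) (seq s len) <= v.
Proof. intros Hv. revert s; induction len; intros s; [unfold sumL; simpl; lra|].
  change (seq s (S len)) with (s :: seq (S s) len). unfold sumL at 1; simpl fold_right.
  fold (sumL (fun x => if Nat.eqb d x then v else 0) (seq (S s) len)).
  destruct (Nat.eqb_spec d s).
  - subst. rewrite (sumL_ext _ (fun _ => 0)), sumL_zero; [lra|].
    intros a Ha; apply in_seq in Ha. destruct (Nat.eqb_spec s a); [lia|auto].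
  - specialize (IHlen (S s)). lra. Qed.

Lemma Xsize_pos h : (0 < Xsize h)%nat.
Proof. unfold Xsize. pose proof (Nat.pow_nonzero 2 (Z.to_nat (Rceil h))). lia. Qed.

Lemma good_le n b c P D x t v : 0 <= v ->
  (if good n b c P D x t then v else 0) <= (if Nat.eqb (D t) x then v else 0).
Proof. intros Hv. unfold good. destruct (forallb _ _); simpl; destruct (Nat.eqb (D t) x); lra. Qed.

Lemma converse n h b c eps P D : 0 < b -> b < c -> c < 1 -> eps < 1 ->
  safe_protocol n h b c eps P D ->
  (1 - eps) * ln (INR (Xsize h)) - ln 2 <= INR n * (ln (1 - b) + kap c * b).
Proof. intros Hb Hbc Hc He [[Hw [HD Hgood]] Hsafe].
  set (K := Xsize h) in *.
  assert (HK : (0 < K)%nat) by apply Xsize_pos.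
  assert (HKr : 1 <= INR K) by (apply (le_INR 1); lia).
  set (P0 := fun t => tprob P 0 [] [] t).
  assert (HsP0 : sumL P0 (transcripts P) = 1) by (apply (total_prob n K P 0 []); auto).
  assert (HP0nn : forall t, 0 <= P0 t).
  { intros t. unfold P0. rewrite (tprob_fact n) by (apply (wf_spk n K P Hw)).
    apply Rmult_le_pos; [apply okw_nonneg|]. apply prodL_nonneg. intros j _.
    apply fac_nonneg. apply (wf_nonneg n K P 0 Hw HK). }
  set (S := fun x => sumL (fun t => if good n b c P D x t then P0 t else 0) (transcripts P)).
  assert (Hpig : exists x, (x < K)%nat /\ S x <= 1 / INR K).
  { apply NNPP. intros Hn.
    assert (Hall : forall x, In x (seq 0 K) -> 1 / INR K < S x).
    { intros x Hx. apply in_seq in Hx. apply Rnot_le_lt. intros Hle. apply Hn. exists x; split; auto; lia. }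
    apply sumL_lt in Hall; [|destruct K; [lia|discriminate]].
    rewrite sumL_const, length_seq in Hall.
    replace (INR K * (1 / INR K)) with 1 in Hall by (field; lra).
    unfold S in Hall. rewrite sumL_swap in Hall.
    assert (sumL (fun t => sumL (fun x => if good n b c P D x t then P0 t else 0) (seq 0 K)) (transcripts P)
            <= sumL P0 (transcripts P)).
    { apply sumL_le. intros t _. eapply Rle_trans.
      - apply sumL_le. intros x _. apply (good_le n b c P D x t (P0 t) (HP0nn t)).
      - apply delta_sum; auto. }
    lra. }
  destruct Hpig as [x [Hx HSx]].
  specialize (Hgood x Hx).
  change (fold_right _ 0 (transcripts P)) with
     (sumL (fun t => if good n b c P D x t then prT n b P x t else 0) (transcripts P)) in Hgood.
  assert (HP0x : forall t, tprob P x [] [] t = P0 t) by (intros; apply tprob_nil_indep).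
  assert (Hsafe' : forall i, (i < n)%nat -> forall t, 0 < prT n b P x t -> posterior n b P i x t <= c).
  { intros i Hi t Ht. apply Hsafe; auto. }
  set (DD := sumL (fun t => prT n b P x t * ln (prT n b P x t / P0 t)) (transcripts P)).
  assert (Hup : DD <= INR n * (ln (1 - b) + kap c * b)).
  { unfold DD. eapply Rle_trans.
    - apply sumL_le. intros t _. rewrite <- HP0x.
      apply (conv_point n K b c P x t Hw Hx Hb Hbc Hc). intros i Hi Ht; apply Hsafe'; auto.
    - rewrite sumL_swap. rewrite (sumL_ext _ (fun _ => ln (1 - b) + kap c * b)).
      + rewrite sumL_const, length_seq. lra.
      + intros i Hi. apply in_seq in Hi. rewrite sumL_plus.
        rewrite (sumL_ext (fun a => prT n b P x a * ln (1 - b)) (fun a => ln (1 - b) * prT n b P x a))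
          by (intros; lra).
        rewrite !sumL_scal. pose proof (sum_prT n K b P x Hw Hx) as T1. pose proof (sum_prT_Li n K b P i x Hw Hx ltac:(lia)) as T2.
        change (sumL (prT n b P x) (transcripts P) = 1) in T1.
        change (sumL (prT_Li n b P i x) (transcripts P) = b) in T2.
        rewrite T1, T2. lra. }
  set (gam := fun t => if good n b c P D x t then INR K else 1).
  assert (Hlow : sumL (fun t => prT n b P x t * ln (gam t) - prT n b P x t * ln 2 - gam t * P0 t / 2 + prT n b P x t)
                   (transcripts P) <= DD).
  { unfold DD. apply sumL_le. intros t _. apply DV_point.
    - apply (prT_nonneg n K b P x t Hw Hx). lra.
    - auto.
    - intros Hp. rewrite <- HP0x. destruct (conv_point n K b c P x t Hw Hx Hb Hbc Hc) as [Hpos _].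
      + intros i Hi Ht; apply Hsafe'; auto.
      + apply Hpos; auto.
    - unfold gam. destruct (good n b c P D x t); lra. }
  assert (HlnK : 0 <= ln (INR K)) by (rewrite <- ln_1; apply ln_le; lra).
  assert (E1 : sumL (fun t => prT n b P x t * ln (gam t) - prT n b P x t * ln 2 - gam t * P0 t / 2 + prT n b P x t)
                   (transcripts P) =
      ln (INR K) * sumL (fun t => if good n b c P D x t then prT n b P x t else 0) (transcripts P)
      - ln 2 * sumL (fun t => prT n b P x t) (transcripts P)
      - (INR K * S x + sumL (fun t => if good n b c P D x t then 0 else P0 t) (transcripts P)) / 2
      + sumL (fun t => prT n b P x t) (transcripts P)).
  { unfold S. rewrite <- !sumL_scal.
    assert (forall (f g : list nat -> R) l, sumL f l - sumL g l = sumL (fun a => f a - g a) l) as Hm.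
    { intros f g l. induction l; unfold sumL in *; simpl; [lra|]. rewrite <- IHl. lra. }
    unfold Rdiv. rewrite <- sumL_plus. rewrite (Rmult_comm _ (/2)), <- sumL_scal.
    rewrite !Hm, <- sumL_plus. apply sumL_ext. intros t _. unfold gam.
    destruct (good n b c P D x t); [lra|]. rewrite ln_1. lra. }
  assert (Hbad : sumL (fun t => if good n b c P D x t then 0 else P0 t) (transcripts P) <= 1).
  { rewrite <- HsP0. apply sumL_le. intros t _. pose proof (HP0nn t). destruct (good n b c P D x t); lra. }
  rewrite (sum_prT n K b P x Hw Hx) in E1.
  assert (INR K * S x <= 1).
  { apply (Rmult_le_compat_l (INR K)) in HSx; [|lra]. replace (INR K * (1 / INR K)) with 1 in HSx by (field; lra). lra. }
  assert ((1 - eps) * ln (INR K) <= ln (INR K) * sumL (fun t => if good n b c P D x t then prT n b P x t else 0) (transcripts P)).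
  { rewrite Rmult_comm. apply Rmult_le_compat_l; auto. }
  lra.
Qed.

Definition pqS (s : R) (m : nat) : R := if Nat.eqb m 0 then 1 - s else if Nat.eqb m 1 then s else 0.
Definition pxS (s : R) (y : nat) (x m : nat) : R :=
  if Nat.eqb x y then (if Nat.eqb m 1 then 1 else 0) else pqS s m.

Definition ach (n K : nat) (s : R) : protocol :=
  Protocol (n * K)%nat (fun t => if Nat.ltb (length t) (n * K)%nat
                             then Some ((length t / K)%nat, 2%nat, pqS s, pxS s (length t mod K)%nat)
                             else None).

Lemma ach_wf n K s : (0 < K)%nat -> 0 <= s <= 1 -> wf_protocol n K (ach n K s).
Proof. intros HK Hs. split.
  - intros t Ht. simpl in *. destruct (Nat.ltb_spec (length t) (n * K)); [lia|auto].
  - intros t i M pq px Ha. simpl in Ha. destruct (Nat.ltb_spec (length t) (n * K)); [|discriminate].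
    injection Ha as <- <- <- <-. split; [|split].
    + apply Nat.Div0.div_lt_upper_bound. lia.
    + split. intros m; unfold pqS; destruct (Nat.eqb m 0); [lra|destruct (Nat.eqb m 1); lra].
      unfold rsum; simpl. unfold pqS; simpl. lra.
    + intros x _. split. intros m; unfold pxS, pqS; destruct (Nat.eqb x _); destruct (Nat.eqb m 0), (Nat.eqb m 1); lra.
      unfold rsum; simpl. unfold pxS, pqS; simpl. destruct (Nat.eqb x _); lra.
Qed.

Lemma prodL_const v s n : prodL (fun _ => v) (seq s n) = v ^ n.
Proof. revert s; induction n; intros s; [reflexivity|]. change (seq s (S n)) with (s :: seq (S s) n).
  change (prodL ?f (?a :: ?l)) with (f a * prodL f l). rewrite IHn. reflexivity. Qed.

Lemma prodL_blocks (K y : nat) (G : nat -> R) n : (y < K)%nat ->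
  prodL (fun k => if Nat.eqb (k mod K)%nat y then G (k / K)%nat else 1) (seq 0 (n * K)) = prodL G (seq 0 n).
Proof. intros Hy. induction n.
  - reflexivity.
  - replace (S n * K)%nat with (n * K + K)%nat by lia. rewrite seq_app, prodL_app, IHn.
    rewrite seq_S, prodL_app. f_equal. simpl (0 + n * K)%nat. simpl (0 + n)%nat.
    change (prodL G [n]) with (G n * 1). rewrite Rmult_1_r.
    replace (seq (n * K) K) with (map (fun j => n * K + j)%nat (seq 0 K)).
    2:{ clear. generalize (n * K)%nat. intros a. revert a. induction K; intros a; [reflexivity|].
        rewrite seq_S, map_app, IHK, seq_S. simpl. reflexivity. }
    rewrite prodL_map.
    rewrite (prodL_ext _ (fun j => if Nat.eqb j y then G n else 1)).
    + rewrite prodL_upd by lia.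
      rewrite (prodL_ext _ (fun _ => 1)), prodL_one. lra. intros a _. destruct (Nat.eqb a y); auto.
    + intros j Hj. apply in_seq in Hj.
      assert (E1 : ((n * K + j) mod K = j)%nat).
      { rewrite Nat.add_comm, Nat.Div0.mod_add. apply Nat.mod_small. lia. }
      assert (E2 : ((n * K + j) / K = n)%nat).
      { rewrite Nat.div_add_l by lia. rewrite Nat.div_small by lia. lia. }
      rewrite E1, E2. reflexivity.
Qed.

Section Moment.
Variables (n K : nat) (s : R) (x : nat) (l : list bool).
Hypothesis HK : (0 < K)%nat.
Hypothesis Hs : 0 <= s <= 1.

Lemma ach_moment (w : nat -> nat -> R) (cf : nat -> R) :
  (forall k, (k < n * K)%nat ->
     sumL (fun m => (if nth (k / K)%nat l false then pxS s (k mod K)%nat x m else pqS s m) * w k m) (seq 0 2) = cf k) ->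
  sumL (fun t => tprob (ach n K s) x l [] t * phiw (fun pre m => w (length pre) m) [] t) (transcripts (ach n K s))
  = prodL cf (seq 0 (n * K)).
Proof. intros Hc. pose proof (ach_wf n K s HK Hs) as [H1 H2]. unfold transcripts.
  rewrite (sum_transcripts_gen (ach n K s) x l _ (fun pre => prodL cf (seq (length pre) (n * K - length pre)))); auto.
  - simpl. rewrite Nat.sub_0_r. lra.
  - intros pre Ha. simpl in Ha. destruct (Nat.ltb_spec (length pre) (n * K)); [discriminate|].
    replace (n * K - length pre)%nat with 0%nat by lia. reflexivity.
  - intros pre i M pq px Ha. pose proof Ha as Ha'. simpl in Ha. destruct (Nat.ltb_spec (length pre) (n * K)); [|discriminate].
    injection Ha as <- <- <- <-.
    rewrite (sumL_ext _ (fun m => stepw (ach n K s) x l pre m * w (length pre) m *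
       prodL cf (seq (S (length pre)) (n * K - S (length pre))))).
    2:{ intros m _. rewrite length_app. simpl length. replace (length pre + 1)%nat with (S (length pre)) by lia. reflexivity. }
    replace (n * K - length pre)%nat with (S (n * K - S (length pre)))%nat by lia.
    change (prodL cf (seq (length pre) (S ?a))) with (cf (length pre) * prodL cf (seq (S (length pre)) a)).
    rewrite <- (Hc (length pre)) by auto.
    rewrite (Rmult_comm (sumL _ _)), <- sumL_scal.
    apply sumL_ext. intros m Hm. apply in_seq in Hm. unfold stepw. rewrite Ha'.
    replace (Nat.ltb m 2) with true by (symmetry; apply Nat.ltb_lt; lia). lra.
Qed.
End Moment.

Fixpoint cntw (K y k : nat) (t : list nat) : R :=
  match t with
  | [] => 0
  | m :: r => (if Nat.eqb (k mod K)%nat y then INR m else 0) + cntw K y (S k) r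
  end.

Lemma phiw_cnt K y lam pre rest :
  phiw (fun pre m => if Nat.eqb (length pre mod K)%nat y then exp (lam * INR m) else 1) pre rest
  = exp (lam * cntw K y (length pre) rest).
Proof. revert pre; induction rest; intros pre; simpl.
  - rewrite Rmult_0_r, exp_0. reflexivity.
  - rewrite IHrest, length_app. simpl length. replace (length pre + 1)%nat with (S (length pre)) by lia.
    destruct (Nat.eqb (length pre mod K)%nat y).
    + rewrite <- exp_plus. f_equal. ring.
    + rewrite Rplus_0_l, Rmult_1_l. reflexivity.
Qed.

Lemma Rceil_ge h : h <= IZR (Rceil h).
Proof. unfold Rceil. rewrite opp_IZR. destruct (base_Int_part (- h)). lra. Qed.

Lemma Rceil_lt h : IZR (Rceil h) < h + 1.
Proof. unfold Rceil. rewrite opp_IZR. destruct (base_Int_part (- h)). lra. Qed.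

Lemma Xsize_INR h : INR (Xsize h) = 2 ^ (Z.to_nat (Rceil h)).
Proof. unfold Xsize. rewrite pow_INR. reflexivity. Qed.

Lemma ln_Xsize h : h * ln 2 <= ln (INR (Xsize h)).
Proof. rewrite Xsize_INR, ln_pow by lra.
  assert (h <= INR (Z.to_nat (Rceil h))).
  { pose proof (Rceil_ge h). destruct (Z_le_gt_dec 0 (Rceil h)) as [H0|H0].
    - rewrite INR_IZR_INZ, Z2Nat.id by auto. auto.
    - apply Z.gt_lt in H0. apply IZR_lt in H0. pose proof (pos_INR (Z.to_nat (Rceil h))). lra. }
  pose proof ln_lt_2. apply Rmult_le_compat_r; lra. Qed.

Lemma Xsize_upper h : 0 <= h -> INR (Xsize h) <= 2 * exp (h * ln 2).
Proof. intros Hh. rewrite Xsize_INR.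
  assert (H0 : (0 <= Rceil h)%Z) by (apply le_IZR; pose proof (Rceil_ge h); lra).
  assert (Hk : INR (Z.to_nat (Rceil h)) < h + 1).
  { rewrite INR_IZR_INZ, Z2Nat.id by auto. apply Rceil_lt. }
  assert (E1 : 2 ^ Z.to_nat (Rceil h) = exp (INR (Z.to_nat (Rceil h)) * ln 2)).
  { rewrite <- ln_pow by lra. rewrite exp_ln; auto. apply pow_lt; lra. }
  assert (E2 : 2 * exp (h * ln 2) = exp ((h + 1) * ln 2)).
  { replace ((h + 1) * ln 2) with (h * ln 2 + ln 2) by ring. rewrite exp_plus, exp_ln by lra. ring. }
  rewrite E1, E2. left. apply exp_increasing.
  pose proof ln_lt_2. apply Rmult_lt_compat_r; lra. Qed.

Lemma exp_INR_pow n v : exp (INR n * v) = exp v ^ n.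
Proof. induction n. simpl. rewrite Rmult_0_l, exp_0; reflexivity.
  rewrite S_INR. simpl pow. rewrite <- IHn, <- exp_plus. f_equal. ring. Qed.

Section Ach.
Variables (n K : nat) (b s : R).
Hypothesis HK : (0 < K)%nat.
Hypothesis Hs : 0 <= s <= 1.
Hypothesis Hb : 0 < b < 1.

Lemma prT_times_sum x (Phi : list nat -> R) :
  sumL (fun t => prT n b (ach n K s) x t * Phi t) (transcripts (ach n K s)) =
  sumL (fun l => indep_prob b l * sumL (fun t => tprob (ach n K s) x l [] t * Phi t) (transcripts (ach n K s))) (allbools n).
Proof. unfold prT.
  change (fun t => fold_right _ 0 (allbools n) * Phi t) with
   (fun t => sumL (fun l => indep_prob b l * tprob (ach n K s) x l [] t) (allbools n) * Phi t).
  rewrite (sumL_ext _ (fun t => sumL (fun l => indep_prob b l * (tprob (ach n K s) x l [] t * Phi t)) (allbools n))).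
  - rewrite sumL_swap. apply sumL_ext. intros l _. rewrite sumL_scal. reflexivity.
  - intros t _. rewrite Rmult_comm, <- sumL_scal. apply sumL_ext. intros; lra.
Qed.

Lemma moment_up x y lam : (x < K)%nat -> (y < K)%nat -> x <> y ->
  sumL (fun t => prT n b (ach n K s) x t * exp (lam * cntw K y 0 t)) (transcripts (ach n K s))
  = ((1 - s) + s * exp lam) ^ n.
Proof. intros Hx Hy Hxy. rewrite prT_times_sum.
  rewrite (sumL_ext _ (fun l => ((1 - s) + s * exp lam) ^ n * indep_prob b l)).
  - rewrite sumL_scal. pose proof (indep_sum n b) as I1. change (sumL (indep_prob b) (allbools n) = 1) in I1. rewrite I1. lra.
  - intros l _. rewrite Rmult_comm. f_equal.
    set (w := fun k m => if Nat.eqb (k mod K)%nat y then exp (lam * INR m) else 1).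
    set (cf := fun k => if Nat.eqb (k mod K)%nat y then ((1 - s) + s * exp lam) else 1).
    transitivity (prodL cf (seq 0 (n * K))).
    + rewrite <- (ach_moment n K s x l HK Hs w cf).
      * apply sumL_ext. intros t _. f_equal. unfold w. rewrite (phiw_cnt K y lam [] t). reflexivity.
      * intros k Hk. unfold w, cf. destruct (Nat.eqb_spec (k mod K)%nat y) as [E|E].
        -- unfold sumL; simpl. unfold pxS, pqS. rewrite E. destruct (Nat.eqb_spec x y); [lia|].
           simpl. rewrite Rmult_0_r, exp_0, Rmult_1_r. rewrite Rmult_1_r. destruct (nth (k / K) l false); lra.
        -- unfold sumL; simpl. unfold pxS, pqS. simpl.
           destruct (nth (k / K) l false); [destruct (Nat.eqb x (k mod K)); simpl|]; lra.
    + unfold cf. rewrite (prodL_blocks K y (fun _ => (1 - s) + s * exp lam)) by auto. apply prodL_const.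
Qed.

Lemma moment_low x lam : (x < K)%nat ->
  sumL (fun t => prT n b (ach n K s) x t * exp (lam * cntw K x 0 t)) (transcripts (ach n K s))
  = (b * exp lam + (1 - b) * ((1 - s) + s * exp lam)) ^ n.
Proof. intros Hx. rewrite prT_times_sum.
  set (G := fun (l : list bool) (i : nat) => if nth i l false then exp lam else (1 - s) + s * exp lam).
  rewrite (sumL_ext _ (fun l => indep_prob b l * prodL (fun i => (fun (i : nat) (bb : bool) => if bb then exp lam else (1 - s) + s * exp lam) i (nth i l false)) (seq 0 n))).
  - rewrite (allbools_prod b n (fun (i : nat) (bb : bool) => if bb then exp lam else (1 - s) + s * exp lam)). apply prodL_const.
  - intros l _. f_equal.
    set (w := fun k m => if Nat.eqb (k mod K)%nat x then exp (lam * INR m) else 1).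
    set (cf := fun k => if Nat.eqb (k mod K)%nat x then G l (k / K)%nat else 1).
    transitivity (prodL cf (seq 0 (n * K))).
    + rewrite <- (ach_moment n K s x l HK Hs w cf).
      * apply sumL_ext. intros t _. f_equal. unfold w. rewrite (phiw_cnt K x lam [] t). reflexivity.
      * intros k Hk. unfold w, cf, G. destruct (Nat.eqb_spec (k mod K)%nat x) as [E|E].
        -- unfold sumL; simpl. unfold pxS, pqS. rewrite E, Nat.eqb_refl. simpl.
           rewrite Rmult_0_r, exp_0, !Rmult_1_r. destruct (nth (k / K) l false); lra.
        -- unfold sumL; simpl. unfold pxS, pqS. simpl.
           destruct (nth (k / K) l false); [destruct (Nat.eqb_spec x (k mod K)); [lia|]; simpl|]; lra.
    + unfold cf. rewrite (prodL_blocks K x (G l)) by auto. apply prodL_ext. intros i _. reflexivity.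
Qed.
End Ach.

Section Safe.
Variables (n K : nat) (s : R) (x i : nat).
Hypothesis HK : (0 < K)%nat.
Hypothesis Hs : 0 < s <= 1.
Hypothesis Hx : (x < K)%nat.

Lemma pqS_nonneg m : 0 <= pqS s m.
Proof. unfold pqS. destruct (Nat.eqb m 0); [lra|destruct (Nat.eqb m 1); lra]. Qed.

Lemma facstep_nonneg bb pre m : 0 <= facstep (ach n K s) x i bb pre m.
Proof. unfold facstep; simpl. destruct (Nat.ltb _ _); [|lra]. destruct (Nat.eqb _ i); [|lra].
  destruct bb; [unfold pxS; destruct (Nat.eqb x _); [destruct (Nat.eqb m 1); lra|]|]; apply pqS_nonneg. Qed.

Lemma fac_ach_nonneg bb pre rest : 0 <= fac (ach n K s) x i bb pre rest.
Proof. revert pre; induction rest; intros pre; simpl; [lra|]. apply Rmult_le_pos; auto. apply facstep_nonneg. Qed.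

Lemma facstep_eq (bb : bool) pre m : length pre <> (i * K + x)%nat ->
  facstep (ach n K s) x i true pre m = facstep (ach n K s) x i false pre m.
Proof. intros Hne. unfold facstep; simpl. destruct (Nat.ltb _ _); [|reflexivity].
  destruct (Nat.eqb_spec (length pre / K) i); [|reflexivity].
  unfold pxS. destruct (Nat.eqb_spec x (length pre mod K)); [|reflexivity].
  exfalso. apply Hne. rewrite (Nat.div_mod (length pre) K) by lia. lia. Qed.

Lemma facstep_special pre m : length pre = (i * K + x)%nat ->
  s * facstep (ach n K s) x i true pre m <= facstep (ach n K s) x i false pre m.
Proof. intros He. unfold facstep; simpl. destruct (Nat.ltb _ _); [|lra].
  assert (E1 : (length pre / K = i)%nat).
  { rewrite He, Nat.div_add_l by lia. rewrite Nat.div_small by lia. lia. }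
  assert (E2 : (length pre mod K = x)%nat).
  { rewrite He, Nat.add_comm, Nat.Div0.mod_add. apply Nat.mod_small; lia. }
  rewrite E1, E2, Nat.eqb_refl. unfold pxS, pqS. rewrite Nat.eqb_refl.
  destruct (Nat.eqb m 0) eqn:E0; [apply Nat.eqb_eq in E0; subst; simpl; lra|].
  destruct (Nat.eqb m 1); lra. Qed.

Lemma fac_special rest : forall pre,
  (if Nat.leb (length pre) (i * K + x) then s else 1) * fac (ach n K s) x i true pre rest
  <= fac (ach n K s) x i false pre rest.
Proof. induction rest as [|m r IH]; intros pre; simpl.
  - destruct (Nat.leb _ _); lra.
  - specialize (IH (pre ++ [m])). rewrite length_app in IH. simpl length in IH.
    pose proof (fac_ach_nonneg true (pre ++ [m]) r) as N1.
    pose proof (fac_ach_nonneg false (pre ++ [m]) r) as N0.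
    pose proof (facstep_nonneg true pre m) as S1.
    pose proof (facstep_nonneg false pre m) as S0.
    destruct (Nat.eq_dec (length pre) (i * K + x)) as [E|E].
    + pose proof (facstep_special pre m E) as Hsp.
      rewrite E in IH |- *. rewrite Nat.leb_refl. replace (Nat.leb (i * K + x + 1) (i * K + x)) with false in IH
        by (symmetry; apply Nat.leb_gt; lia).
      cbv beta iota in IH |- *. rewrite Rmult_1_l in IH.
      assert (s * facstep (ach n K s) x i true pre m * fac (ach n K s) x i true (pre ++ [m]) r <=
              facstep (ach n K s) x i false pre m * fac (ach n K s) x i true (pre ++ [m]) r)
        by (apply Rmult_le_compat_r; auto).
      assert (facstep (ach n K s) x i false pre m * fac (ach n K s) x i true (pre ++ [m]) r <=
              facstep (ach n K s) x i false pre m * fac (ach n K s) x i false (pre ++ [m]) r)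
        by (apply Rmult_le_compat_l; auto).
      lra.
    + rewrite (facstep_eq true pre m E).
      destruct (Nat.leb_spec (length pre) (i * K + x)).
      * replace (Nat.leb (length pre + 1) (i * K + x)) with true in IH by (symmetry; apply Nat.leb_le; lia).
        cbv beta iota in IH |- *.
        replace (s * (facstep (ach n K s) x i false pre m * fac (ach n K s) x i true (pre ++ [m]) r))
          with (facstep (ach n K s) x i false pre m * (s * fac (ach n K s) x i true (pre ++ [m]) r)) by ring.
        apply Rmult_le_compat_l; auto.
      * replace (Nat.leb (length pre + 1) (i * K + x)) with false in IH by (symmetry; apply Nat.leb_gt; lia).
        cbv beta iota in IH |- *. rewrite Rmult_1_l in *. apply Rmult_le_compat_l; auto.
Qed.
End Safe.

Lemma ach_safe n K b c s x i t : (0 < K)%nat -> (x < K)%nat -> (i < n)%nat -> 0 < b -> b < c -> c < 1 ->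
  s = b * (1 - c) / (c * (1 - b)) -> 0 < s <= 1 ->
  0 < prT n b (ach n K s) x t -> posterior n b (ach n K s) i x t <= c.
Proof. intros HK Hx Hi Hb Hbc Hc Hsd Hs Hp.
  pose proof (ach_wf n K s HK ltac:(lra)) as Hw.
  destruct (split_i n b (ach n K s) x t i (wf_spk n K _ Hw) Hi) as [E1 E2].
  pose proof (fac_special n K s x i HK Hs Hx t []) as Hf. simpl in Hf.
  set (F1 := fac (ach n K s) x i true [] t) in *. set (F0 := fac (ach n K s) x i false [] t) in *.
  assert (HF1 : 0 <= F1) by (apply fac_ach_nonneg; auto; lra).
  assert (HF0 : 0 <= F0) by (apply fac_ach_nonneg; auto; lra).
  pose proof (okw_nonneg (ach n K s) [] t) as HO.
  pose proof (Rr_nonneg n K b (ach n K s) x t Hw Hx ltac:(lra) i) as HR.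
  assert (Hkey : b * F1 <= c * gfac b (ach n K s) x t i).
  { unfold gfac. fold F1 F0.
    assert (b * (1 - c) = c * (1 - b) * s) by (rewrite Hsd; field; lra).
    assert (b * (1 - c) * F1 <= c * (1 - b) * F0).
    { rewrite H. rewrite Rmult_assoc. apply Rmult_le_compat_l; [nra|]. lra. }
    nra. }
  assert (HL : prT_Li n b (ach n K s) i x t <= c * prT n b (ach n K s) x t).
  { rewrite E1, E2. assert (0 <= okw (ach n K s) [] t * Rr b (ach n K s) x t n i) by nra.
    replace (okw (ach n K s) [] t * (b * F1) * Rr b (ach n K s) x t n i) with
      ((okw (ach n K s) [] t * Rr b (ach n K s) x t n i) * (b * F1)) by ring.
    replace (c * (okw (ach n K s) [] t * gfac b (ach n K s) x t i * Rr b (ach n K s) x t n i)) with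
      ((okw (ach n K s) [] t * Rr b (ach n K s) x t n i) * (c * gfac b (ach n K s) x t i)) by ring.
    apply Rmult_le_compat_l; auto. }
  unfold posterior, Rdiv. apply Rle_trans with (c * prT n b (ach n K s) x t * / prT n b (ach n K s) x t).
  - apply Rmult_le_compat_r; auto. left; apply Rinv_0_lt_compat; auto.
  - right; field; lra.
Qed.

Definition dec (K : nat) (thr : R) (t : list nat) : nat :=
  match find (fun y => Rle_bool thr (cntw K y 0 t)) (seq 0 K) with Some y => y | None => 0%nat end.

Lemma dec_lt K thr t : (0 < K)%nat -> (dec K thr t < K)%nat.
Proof. intros HK. unfold dec. destruct (find _ _) eqn:E; [|auto].
  apply find_some in E. destruct E as [E _]. apply in_seq in E. lia. Qed.

Lemma find_seq_spec (p : nat -> bool) x s len : (s <= x < s + len)%nat -> p x = true ->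
  (forall y, (s <= y < x)%nat -> p y = false) -> find p (seq s len) = Some x.
Proof. revert s; induction len; intros s Hx Hp Hlt; [lia|].
  change (seq s (S len)) with (s :: seq (S s) len). simpl.
  destruct (Nat.eq_dec s x) as [<-|Ne]; [rewrite Hp; reflexivity|].
  rewrite Hlt by lia. apply IHlen; auto; [lia|]. intros; apply Hlt; lia. Qed.

Lemma Rle_bool_true a c : Rle_bool a c = true <-> a <= c.
Proof. unfold Rle_bool. destruct (Rle_dec a c); split; intros; auto; try discriminate; lra. Qed.

Lemma sumL_elem_le {A} (f : A -> R) l y : (forall a, In a l -> 0 <= f a) -> In y l -> f y <= sumL f l.
Proof. induction l; intros H Hy; [destruct Hy|]. unfold sumL; simpl; fold (sumL f l).
  destruct Hy as [<-|Hy].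
  - pose proof (sumL_nonneg f l (fun a H' => H a (or_intror H'))). lra.
  - pose proof (H a (or_introl eq_refl)). pose proof (IHl (fun a H' => H a (or_intror H')) Hy). lra. Qed.

Ltac dif := repeat match goal with |- context [if ?b then _ else _] => destruct b end.

Definition ilow K x thr t : R := if Rle_bool thr (cntw K x 0 t) then 0 else 1.
Definition iup K y thr t : R := if Rle_bool thr (cntw K y 0 t) then 1 else 0.
Definition badi K x thr t : R :=
  ilow K x thr t + sumL (fun y => if Nat.eqb y x then 0 else iup K y thr t) (seq 0 K).

Lemma good_point n b c P K x thr t : (x < K)%nat ->
  0 <= prT n b P x t ->
  (forall i, (i < n)%nat -> 0 < prT n b P x t -> posterior n b P i x t <= c) ->
  prT n b P x t - prT n b P x t * badi K x thr t <= if good n b c P (dec K thr) x t then prT n b P x t else 0.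
Proof. intros Hx Hp Hs.
  assert (Hb0 : 0 <= badi K x thr t).
  { unfold badi, ilow. apply Rplus_le_le_0_compat; [dif; lra|].
    apply sumL_nonneg. intros y _. unfold iup. dif; lra. }
  destruct (good n b c P (dec K thr) x t) eqn:G; [nra|].
  destruct (Req_dec (prT n b P x t) 0) as [Z|NZ]; [rewrite Z; lra|].
  assert (Hp' : 0 < prT n b P x t) by lra.
  destruct (Rlt_le_dec (badi K x thr t) 1) as [Hlt|Hge]; [|nra].
  exfalso.
  assert (Hterms : forall y, In y (seq 0 K) -> 0 <= (if Nat.eqb y x then 0 else iup K y thr t)).
  { intros y _. unfold iup. dif; lra. }
  assert (Hlow : Rle_bool thr (cntw K x 0 t) = true).
  { unfold badi, ilow in Hlt. pose proof (sumL_nonneg _ _ Hterms). destruct (Rle_bool thr (cntw K x 0 t)); [auto|lra]. }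
  assert (Hup : forall y, (y < K)%nat -> y <> x -> Rle_bool thr (cntw K y 0 t) = false).
  { intros y Hy Hne. unfold badi in Hlt. unfold ilow in Hlt. rewrite Hlow in Hlt.
    pose proof (sumL_elem_le _ _ y Hterms ltac:(apply in_seq; lia)) as H1. simpl in H1.
    replace (Nat.eqb y x) with false in H1 by (symmetry; apply Nat.eqb_neq; auto). unfold iup in H1, Hlt. destruct (Rle_bool thr (cntw K y 0 t)); [lra|auto]. }
  assert (Hd : dec K thr t = x).
  { unfold dec. rewrite (find_seq_spec _ x 0 K); auto; [lia|]. intros y Hy. apply Hup; lia. }
  unfold good in G. rewrite Hd, Nat.eqb_refl, Bool.andb_true_r in G.
  assert (forallb (fun i => Rle_bool (posterior n b P i x t) c) (seq 0 n) = true).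
  { apply forallb_forall. intros i Hi. apply in_seq in Hi. apply Rle_bool_true. apply Hs; auto; lia. }
  congruence.
Qed.

Lemma ilow_le K x thr t mu : 0 <= mu -> ilow K x thr t <= exp (mu * thr) * exp (- mu * cntw K x 0 t).
Proof. intros Hmu. unfold ilow. rewrite <- exp_plus. destruct (Rle_bool thr (cntw K x 0 t)) eqn:E.
  - left; apply exp_pos.
  - assert (~ thr <= cntw K x 0 t) by (intro H; apply Rle_bool_true in H; congruence).
    pose proof (exp_ineq1_le (mu * thr + - mu * cntw K x 0 t)). nra. Qed.

Lemma iup_le K y thr t lam : 0 <= lam -> iup K y thr t <= exp (- lam * thr) * exp (lam * cntw K y 0 t).
Proof. intros Hl. unfold iup. rewrite <- exp_plus. destruct (Rle_bool thr (cntw K y 0 t)) eqn:E.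
  - apply Rle_bool_true in E. pose proof (exp_ineq1_le (- lam * thr + lam * cntw K y 0 t)). nra.
  - left; apply exp_pos. Qed.

Lemma ach_error n K b c s x thr mu lam : (0 < K)%nat -> (x < K)%nat -> 0 < b -> b < c -> c < 1 ->
  s = b * (1 - c) / (c * (1 - b)) -> 0 < s <= 1 -> 0 <= mu -> 0 <= lam ->
  1 - exp (mu * thr) * (b * exp (- mu) + (1 - b) * ((1 - s) + s * exp (- mu))) ^ n
    - INR K * (exp (- lam * thr) * ((1 - s) + s * exp lam) ^ n)
  <= sumL (fun t => if good n b c (ach n K s) (dec K thr) x t then prT n b (ach n K s) x t else 0)
          (transcripts (ach n K s)).
Proof. intros HK Hx Hb Hbc Hc Hsd Hs Hmu Hlam.
  pose proof (ach_wf n K s HK ltac:(lra)) as Hw.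
  set (P := ach n K s) in *.
  assert (Hpnn : forall t, 0 <= prT n b P x t) by (intros; apply (prT_nonneg n K b P x t Hw Hx); lra).
  eapply Rle_trans; [|apply sumL_le; intros t _; apply (good_point n b c P K x thr t Hx (Hpnn t));
     intros i Hi Hp; apply (ach_safe n K b c s x i t); auto].
  rewrite (sumL_ext (fun t => prT n b P x t - prT n b P x t * badi K x thr t)
     (fun t => prT n b P x t + (-1) * (prT n b P x t * ilow K x thr t) +
        (-1) * sumL (fun y => prT n b P x t * (if Nat.eqb y x then 0 else iup K y thr t)) (seq 0 K)))
     by (intros t _; unfold badi; rewrite sumL_scal; lra).
  rewrite !sumL_plus, !sumL_scal.
  pose proof (sum_prT n K b P x Hw Hx) as T1. change (sumL (prT n b P x) (transcripts P) = 1) in T1.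
  change (sumL (fun t => prT n b P x t) (transcripts P)) with (sumL (prT n b P x) (transcripts P)).
  rewrite T1.
  assert (HL : sumL (fun t => prT n b P x t * ilow K x thr t) (transcripts P) <=
     exp (mu * thr) * (b * exp (- mu) + (1 - b) * ((1 - s) + s * exp (- mu))) ^ n).
  { rewrite <- (moment_low n K b s HK ltac:(lra) x (- mu) Hx), <- sumL_scal. apply sumL_le. intros t _.
    pose proof (ilow_le K x thr t mu Hmu). pose proof (Hpnn t).
    replace (exp (mu * thr) * (prT n b (ach n K s) x t * exp (- mu * cntw K x 0 t)))
      with (prT n b P x t * (exp (mu * thr) * exp (- mu * cntw K x 0 t))) by (unfold P; ring).
    apply Rmult_le_compat_l; auto. }
  assert (HU : sumL (fun t => sumL (fun y => prT n b P x t * (if Nat.eqb y x then 0 else iup K y thr t)) (seq 0 K)) (transcripts P)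
      <= INR K * (exp (- lam * thr) * ((1 - s) + s * exp lam) ^ n)).
  { rewrite sumL_swap. rewrite <- (length_seq K 0) at 2. rewrite <- sumL_const.
    apply sumL_le. intros y Hy. apply in_seq in Hy.
    destruct (Nat.eqb_spec y x).
    - rewrite (sumL_ext _ (fun _ => 0)), sumL_zero by (intros; lra).
      apply Rmult_le_pos; [left; apply exp_pos|]. apply pow_le.
      pose proof (exp_pos lam). nra.
    - rewrite <- (moment_up n K b s HK ltac:(lra) x y lam Hx ltac:(lia) ltac:(auto)), <- sumL_scal.
      apply sumL_le. intros t _. pose proof (iup_le K y thr t lam Hlam). pose proof (Hpnn t).
      replace (exp (- lam * thr) * (prT n b (ach n K s) x t * exp (lam * cntw K y 0 t)))
        with (prT n b P x t * (exp (- lam * thr) * exp (lam * cntw K y 0 t))) by (unfold P; ring).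
      apply Rmult_le_compat_l; auto. }
  lra.
Qed.

Lemma achievable b c R : 0 < b -> b < c -> c < 1 -> 0 < R ->
  R * ln 2 < ln (1 - b) + (b / c) * (- ln (1 - c)) -> safely_achievable b c R.
Proof. intros Hb Hbc Hc HR Hcap eps Heps n0.
  set (a := b / c). set (s := b * (1 - c) / (c * (1 - b))). set (L := - ln (1 - c)).
  fold a L in Hcap.
  assert (Hln2 : 0 < ln 2) by (pose proof ln_lt_2; lra).
  assert (HL : 0 < L) by (unfold L; assert (ln (1 - c) < ln 1) by (apply ln_increasing; lra); rewrite ln_1 in H; lra).
  assert (Hlb : ln (1 - b) < 0) by (assert (ln (1 - b) < ln 1) by (apply ln_increasing; lra); rewrite ln_1 in H; lra).
  assert (Ha : 0 < a < 1) by (unfold a; split; [apply Rdiv_lt_0_compat; lra|]; apply (Rmult_lt_reg_r c); [lra|];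
       unfold Rdiv; rewrite Rmult_assoc, Rinv_l, Rmult_1_r by lra; lra).
  assert (Hsc : s * (c * (1 - b)) = b * (1 - c)) by (unfold s; field; lra).
  assert (Hs : 0 < s <= 1).
  { assert (0 < c * (1 - b)) by nra. assert (0 < b * (1 - c)) by nra. split; nra. }
  assert (Has : a = b + (1 - b) * s) by (unfold a, s; field; lra).
  set (delta := (ln (1 - b) + a * L - R * ln 2) / (2 * L)).
  assert (Hdelta : 0 < delta < a).
  { unfold delta. split. apply Rdiv_lt_0_compat; lra.
    apply (Rmult_lt_reg_r (2 * L)); [lra|]. unfold Rdiv. rewrite Rmult_assoc, Rinv_l, Rmult_1_r by lra. nra. }
  set (theta := a - delta).
  set (gam := theta * L + ln (1 - b) - R * ln 2).
  assert (Hgam : 0 < gam).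
  { unfold gam, theta. assert (delta * L = (ln (1 - b) + a * L - R * ln 2) / 2) by (unfold delta; field; lra). nra. }
  set (z := (theta / a + 1) / 2).
  assert (Hz : 0 < z < 1 /\ theta < a * z).
  { unfold z. assert (theta / a * a = theta) by (field; lra).
    assert (0 < theta / a) by (apply Rdiv_lt_0_compat; unfold theta; lra).
    assert (theta / a < 1) by (apply (Rmult_lt_reg_r a); [lra|]; unfold theta in *; nra).
    split; [lra|]. unfold theta in *. nra. }
  set (mu := - ln z).
  assert (Hmu : 0 <= mu) by (unfold mu; assert (ln z < ln 1) by (apply ln_increasing; lra); rewrite ln_1 in H; lra).
  assert (Ez : exp (- mu) = z) by (unfold mu; rewrite Ropp_involutive; apply exp_ln; lra).
  set (A := b * exp (- mu) + (1 - b) * ((1 - s) + s * exp (- mu))).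
  assert (EA : A = 1 - a + a * z) by (unfold A; rewrite Ez, Has; ring).
  set (rho2 := exp (mu * theta) * A).
  assert (Hrho2 : 0 < rho2 < 1).
  { unfold rho2. rewrite EA. split.
    - apply Rmult_lt_0_compat; [apply exp_pos|]. nra.
    - assert (E1 : exp (mu * theta) * exp (- (mu * theta)) = 1) by (rewrite <- exp_plus; replace (mu * theta + - (mu * theta)) with 0 by ring; apply exp_0).
      pose proof (exp_ineq1_le (- (mu * theta))) as H1.
      pose proof (ln_le_sub1 (/ z) ltac:(apply Rinv_0_lt_compat; lra)) as H2. rewrite ln_Rinv in H2 by lra.
      fold mu in H2.
      assert (Hth : 0 < theta) by (unfold theta; lra).
      assert (E3 : theta * (/ z - 1) < a * (1 - z)).
      { assert (/ z - 1 = (1 - z) / z) by (field; lra). rewrite H.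
        assert (theta / z < a) by (apply (Rmult_lt_reg_r z); [lra|]; unfold Rdiv; rewrite Rmult_assoc, Rinv_l, Rmult_1_r by lra; lra).
        replace (theta * ((1 - z) / z)) with ((1 - z) * (theta / z)) by (field; lra). nra. }
      assert (1 - a + a * z < exp (- (mu * theta))) by nra.
      pose proof (exp_pos (mu * theta)). nra. }
  set (rho1 := exp (- gam)).
  assert (Hrho1 : 0 < rho1 < 1).
  { unfold rho1. split; [apply exp_pos|]. rewrite <- exp_0. apply exp_increasing. lra. }
  destruct (pow_lt_1_zero rho2 ltac:(rewrite Rabs_pos_eq; lra) (eps / 2) ltac:(lra)) as [N1 HN1].
  destruct (pow_lt_1_zero rho1 ltac:(rewrite Rabs_pos_eq; lra) (eps / 4) ltac:(lra)) as [N2 HN2].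
  set (n := Nat.max n0 (Nat.max N1 N2)).
  specialize (HN1 n ltac:(unfold n; lia)). specialize (HN2 n ltac:(unfold n; lia)).
  rewrite Rabs_pos_eq in HN1 by (apply pow_le; lra). rewrite Rabs_pos_eq in HN2 by (apply pow_le; lra).
  set (h := INR n * R). set (K := Xsize h). set (thr := theta * INR n).
  exists n. split; [unfold n; lia|]. exists (ach n K s), (dec K thr).
  assert (HK : (0 < K)%nat) by apply Xsize_pos.
  split; [split; [|split]|].
  - apply ach_wf; auto; lra.
  - intros t. apply dec_lt; auto.
  - intros x Hx. fold K in Hx.
    change (fold_right _ 0 (transcripts (ach n K s))) with
      (sumL (fun t => if good n b c (ach n K s) (dec K thr) x t then prT n b (ach n K s) x t else 0) (transcripts (ach n K s))).
    eapply Rle_trans; [|apply (ach_error n K b c s x thr mu L HK Hx Hb Hbc Hc eq_refl Hs Hmu ltac:(lra))].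
    fold A.
    assert (Elow : exp (mu * thr) * A ^ n = rho2 ^ n).
    { unfold rho2, thr. rewrite Rpow_mult_distr, <- exp_INR_pow. f_equal. f_equal. ring. }
    assert (EL : exp L = / (1 - c)) by (unfold L; rewrite <- ln_Rinv by lra; apply exp_ln; apply Rinv_0_lt_compat; lra).
    assert (EC : (1 - s) + s * exp L = / (1 - b)).
    { rewrite EL. unfold s. field. lra. }
    assert (Eup : exp (- L * thr) * ((1 - s) + s * exp L) ^ n = exp (INR n * (- gam - R * ln 2))).
    { rewrite EC.
      assert (Einv : / (1 - b) = exp (- ln (1 - b))) by (rewrite <- ln_Rinv by lra; rewrite exp_ln; auto; apply Rinv_0_lt_compat; lra).
      rewrite Einv, <- exp_INR_pow, <- exp_plus. f_equal. unfold thr, gam. ring. }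
    rewrite Elow, Eup.
    assert (HKb : INR K <= 2 * exp (h * ln 2)).
    { apply Xsize_upper. unfold h. apply Rmult_le_pos; [apply pos_INR|lra]. }
    assert (E2 : 2 * exp (h * ln 2) * exp (INR n * (- gam - R * ln 2)) = 2 * rho1 ^ n).
    { unfold rho1. rewrite <- exp_INR_pow. rewrite Rmult_assoc, <- exp_plus. f_equal. f_equal. unfold h. ring. }
    assert (INR K * exp (INR n * (- gam - R * ln 2)) <= 2 * rho1 ^ n).
    { rewrite <- E2. apply Rmult_le_compat_r; [left; apply exp_pos|auto]. }
    lra.
  - intros i x t Hi Hx Hp. apply (ach_safe n K b c s x i t); auto.
Qed.

Lemma exp_convex_strict lam a : 0 < lam < 1 -> a <> 0 -> exp (lam * a) < (1 - lam) + lam * exp a.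
Proof. intros Hl Ha.
  pose proof (exp_ineq1 (- (lam * a)) ltac:(intro E; apply Ha; nra)) as H1.
  pose proof (exp_ineq1 ((1 - lam) * a) ltac:(intro E; apply Ha; nra)) as H2.
  assert (E1 : exp (lam * a) * exp (- (lam * a)) = 1) by (rewrite <- exp_plus; replace (lam*a + - (lam*a)) with 0 by ring; apply exp_0).
  assert (E2 : exp (lam * a) * exp ((1 - lam) * a) = exp a) by (rewrite <- exp_plus; f_equal; ring).
  pose proof (exp_pos (lam * a)) as P.
  assert (A1 : exp (lam * a) * (1 - lam * a) < 1).
  { rewrite <- E1. apply Rmult_lt_compat_l; lra. }
  assert (A2 : exp (lam * a) * (1 + (1 - lam) * a) < exp a).
  { rewrite <- E2. apply Rmult_lt_compat_l; lra. }
  assert (exp (lam * a) = (1 - lam) * (exp (lam * a) * (1 - lam * a)) + lam * (exp (lam * a) * (1 + (1 - lam) * a))) by ring.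
  nra. Qed.

Lemma capn_pos b c : 0 < b -> b < c -> c < 1 -> 0 < ln (1 - b) + (b / c) * (- ln (1 - c)).
Proof. intros Hb Hbc Hc. set (lam := b / c).
  assert (Hlc : lam * c = b) by (unfold lam; field; lra).
  assert (Hl : 0 < lam < 1) by (split; nra).
  assert (Ha : ln (1 - c) <> 0).
  { assert (ln (1 - c) < ln 1) by (apply ln_increasing; lra). rewrite ln_1 in H. lra. }
  pose proof (exp_convex_strict lam (ln (1 - c)) Hl Ha) as H. rewrite exp_ln in H by lra.
  replace ((1 - lam) + lam * (1 - c)) with (1 - b) in H by (rewrite <- Hlc; ring).
  apply ln_increasing in H; [|apply exp_pos]. rewrite ln_exp in H. lra. Qed.

Theorem corollary4p3 (b c : R) (hb : 0 < b) (hbc : b < c) (hc : c < 1) :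
  is_safe_capacity b c ((- b * log2 (1 - c) + c * log2 (1 - b)) / c).
Proof.
  set (cap := (- b * log2 (1 - c) + c * log2 (1 - b)) / c).
  assert (Hln2 : 0 < ln 2) by (pose proof ln_lt_2; lra).
  assert (Ecap : cap * ln 2 = ln (1 - b) + (b / c) * (- ln (1 - c))).
  { unfold cap, log2. field. lra. }
  pose proof (capn_pos b c hb hbc hc) as Hpos.
  assert (Hcap : 0 < cap).
  { apply (Rmult_lt_reg_r (ln 2)); auto. lra. }
  split.
  - intros R HR. apply Rnot_lt_le. intros HRc.
    set (eps := (R - cap) / (2 * R)).
    assert (HRp : 0 < R) by lra.
    assert (Heps : 0 < eps < 1).
    { unfold eps. split. apply Rdiv_lt_0_compat; lra.
      apply (Rmult_lt_reg_r (2 * R)); [lra|]. unfold Rdiv. rewrite Rmult_assoc, Rinv_l, Rmult_1_r by lra. lra. }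
    destruct (INR_unbounded (2 / (R - cap))) as [n0 Hn0].
    destruct (HR eps (proj1 Heps) n0) as [n [Hn [P [D Hsafe]]]].
    pose proof (converse n (INR n * R) b c eps P D hb hbc hc (proj2 Heps) Hsafe) as Hconv.
    pose proof (ln_Xsize (INR n * R)) as HX.
    unfold kap in Hconv.
    assert (E : ln (1 - b) + - ln (1 - c) / c * b = cap * ln 2) by (rewrite Ecap; field; lra).
    rewrite E in Hconv.
    assert (H1 : (1 - eps) * (INR n * R * ln 2) <= (1 - eps) * ln (INR (Xsize (INR n * R)))).
    { apply Rmult_le_compat_l; lra. }
    assert (E2 : (1 - eps) * R = (R + cap) / 2) by (unfold eps; field; lra).
    assert (H3 : INR n * ((R - cap) / 2) * ln 2 <= ln 2).
    { replace (INR n * ((R - cap) / 2) * ln 2) with ((1 - eps) * (INR n * R * ln 2) - INR n * (cap * ln 2))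
        by (replace ((1 - eps) * (INR n * R * ln 2)) with (INR n * ((1 - eps) * R) * ln 2) by ring; rewrite E2; field).
      lra. }
    assert (H4 : INR n * ((R - cap) / 2) <= 1).
    { apply (Rmult_le_reg_r (ln 2)); auto. lra. }
    assert (H5 : INR n0 <= INR n) by (apply le_INR; lia).
    assert (H6 : 2 / (R - cap) * ((R - cap) / 2) = 1) by (field; lra).
    assert (0 < (R - cap) / 2) by lra.
    nra.
  - intros u Hu. apply Rnot_lt_le. intros Hlt.
    set (R := (Rmax 0 u + cap) / 2).
    assert (HM1 : 0 <= Rmax 0 u) by apply Rmax_l.
    assert (HM2 : u <= Rmax 0 u) by apply Rmax_r.
    assert (HM3 : Rmax 0 u < cap) by (apply Rmax_lub_lt; lra).
    assert (HRa : safely_achievable b c R).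
    { apply achievable; auto. unfold R; lra. rewrite <- Ecap. apply Rmult_lt_compat_r; auto. unfold R; lra. }
    specialize (Hu R HRa). unfold R in Hu. lra.
Qed.
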